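(* If $\mu\preceq\mu'$ and $v$ is a move on an interval $[a,b]$ that can be applied to $\mu$, then $v\mu\preceq\bar v\mu'$, where $\bar v$ is the extreme move on $[a,b]$.
   Context: A distribution is a finite set $\{(x_1,m_1),\dots,(x_k,m_k)\}$, $m_i>0$; $\mu(A)=\sum_{x_i\in A}m_i$; $M_j[\mu]=\sum_im_ix_i^j$. A move $v=([a,b],\delta)$ has $\delta$ a signed distribution on $[a,b]$ with $M_0[\delta]=M_1[\delta]=0$; it applies to $\mu$ if $\mu+\delta$ is a distribution, and $v\mu=\mu+\delta$. The extreme move $\bar v$ on $[a,b]$ maps any distribution $\mu$ to the distribution $\mu'$ with $\mu'\{a<x<b\}=0$, $\mu'(\{x\})=\mu(\{x\})$ for $x\notin[a,b]$, and $M_0[\mu']=M_0[\mu]$, $M_1[\mu']=M_1[\mu]$. $\mu'$ is a basic split of $\mu$ if obtained by replacing one point mass $(x_i,m_i)$ by finitely many point masses of total mass $m_i$ and center of mass $x_i$; $\mu\preceq\mu'$ if $\mu'$ is obtained from $\mu$ by zero or more basic splits. *)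

(* Defs.v *)
(* Positions and masses live in an arbitrary real field R
   (the paper uses the real numbers; every notion here is order-algebraic). *)
From HB Require Import structures.
From mathcomp Require Import all_boot all_order all_algebra.
From Stdlib Require Import Relations.
Set Implicit Arguments. Unset Strict Implicit. Unset Printing Implicit Defensive.
Import Order.TTheory GRing.Theory Num.Theory.
Local Open Scope ring_scope.

Section Dist.
Variable R : realFieldType.

(* A (signed) point-mass list: pairs (position, mass). *)
Definition pmlist := seq (R * R).

Definition mass_at (s : pmlist) (y : R) : R := \sum_(p <- s | p.1 == y) p.2.

Definition moment (j : nat) (s : pmlist) : R := \sum_(p <- s) p.2 * p.1 ^+ j.

Definition is_dist (s : pmlist) : Prop :=
  uniq (map fst s) /\ (forall p, p \in s -> 0 < p.2).

Definition is_signed_dist_on (a b : R) (d : pmlist) : Prop :=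
  uniq (map fst d) /\ (forall p, p \in d -> p.2 != 0 /\ a <= p.1 <= b).

Definition is_move (a b : R) (d : pmlist) : Prop :=
  is_signed_dist_on a b d /\ moment 0 d = 0 /\ moment 1 d = 0.

Definition move_result (d mu nu : pmlist) : Prop :=
  is_dist nu /\ forall y, mass_at nu y = mass_at mu y + mass_at d y.

Definition extreme_result (a b : R) (mu nu : pmlist) : Prop :=
  is_dist nu /\
  (forall y, a < y < b -> mass_at nu y = 0) /\
  (forall y, ~ (a <= y <= b) -> mass_at nu y = mass_at mu y) /\
  moment 0 nu = moment 0 mu /\ moment 1 nu = moment 1 mu.

(* Basic split: replace the point mass s`_i = (x_i,m_i) by finitely many point
   masses t (positive masses) of total mass m_i and centre of mass x_i; the
   result (coinciding positions merged) is the distribution s'. *)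
Definition basic_split (s s' : pmlist) : Prop :=
  is_dist s /\ is_dist s' /\
  exists (i : nat) (t : pmlist), (i < size s)%N /\
    (forall p, p \in t -> 0 < p.2) /\
    moment 0 t = (nth (0, 0) s i).2 /\
    moment 1 t = (nth (0, 0) s i).2 * (nth (0, 0) s i).1 /\
    forall y, mass_at s' y = mass_at (take i s ++ drop i.+1 s ++ t) y.

Definition split_le (s s' : pmlist) : Prop :=
  clos_refl_trans pmlist basic_split s s'.

End Dist.

(* Main.v *)
Require Import Defs.
From HB Require Import structures.
From mathcomp Require Import all_boot all_order all_algebra.
From Stdlib Require Import Relations Ring Field.
Set Implicit Arguments. Unset Strict Implicit. Unset Printing Implicit Defensive.
Import Order.TTheory GRing.Theory Num.Theory.
Local Open Scope ring_scope.

Section Alg.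
Variable R : realFieldType.
Notation RT := (GRing.PzSemiRing.sort (Num_RealField__to__GRing_PzSemiRing R)).
Definition radd (x y : RT) : RT := x + y.
Definition rmul (x y : RT) : RT := x * y.
Definition ropp (x : RT) : RT := - x.
Definition rinv (x : RT) : RT := x^-1.
Definition rzero : RT := 0.
Definition rone : RT := 1.
Definition rsub (x y : RT) : RT := radd x (ropp y).
Definition rdiv (x y : RT) : RT := rmul x (rinv y).
Lemma Rrt : @ring_theory RT rzero rone radd rmul rsub ropp eq.
Proof. rewrite /radd /rmul /rsub /ropp /rzero /rone. split=> //; [exact: add0r|exact: addrC|exact: addrA|exact: mul1r|exact: mulrC|exact: mulrA|exact: mulrDl|exact: subrr]. Qed.
Lemma Rft : @field_theory RT rzero rone radd rmul rsub ropp rdiv rinv eq.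
Proof. split=> //; [exact: Rrt| rewrite /rzero /rone; apply/eqP; exact: oner_neq0 | rewrite /rzero /rdiv /rmul /rinv /=; move=> p Hp; apply: mulVf; exact/eqP]. Qed.
Lemma raddE (x y : R) : x + y = radd x y. Proof. by []. Qed.
Lemma rmulE (x y : R) : x * y = rmul x y. Proof. by []. Qed.
Lemma roppE (x : R) : - x = ropp x. Proof. by []. Qed.
Lemma rinvE (x : R) : x^-1 = rinv x. Proof. by []. Qed.
Lemma r0E : 0 = rzero :> R. Proof. by []. Qed.
Lemma r1E : 1 = rone :> R. Proof. by []. Qed.
Lemma rexp2 (x : R) : x ^+ 2 = x * x. Proof. exact: expr2. Qed.
Lemma rexp1 (x : R) : x ^+ 1 = x. Proof. exact: expr1. Qed.
Lemma rexp0 (x : R) : x ^+ 0 = 1. Proof. exact: expr0. Qed.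
Lemma eqRT (x y : RT) : x = y -> x = y. Proof. by []. Qed.
Add Field Rfield : Rft.
Ltac rprep := rewrite ?rexp2 ?rexp1 ?rexp0 ?raddE ?rmulE ?roppE ?rinvE ?r0E ?r1E; match goal with |- @eq _ ?x ?y => change (@eq RT x y) end.

Lemma test (x y : R) : y != 0 -> (x + y) * (x - y) / y = (x*x - y*y)/y.
Proof. move=> /eqP H. rprep. field. exact H. Qed.

Implicit Types (s t u : pmlist R) (x y : R).
Definition meq s t := forall y, mass_at s y = mass_at t y.
Definition pos s := forall p, p \in s -> 0 <= p.2.
Definition nn s := forall y, 0 <= mass_at s y.

Lemma mass_nil y : mass_at ([::] : pmlist R) y = 0.
Proof. by rewrite /mass_at big_nil. Qed.
Lemma mass_cons p s y : mass_at (p :: s) y = (if p.1 == y then p.2 else 0) + mass_at s y.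
Proof. by rewrite /mass_at big_cons; case: ifP; rewrite ?add0r. Qed.
Lemma mass_cat s t y : mass_at (s ++ t) y = mass_at s y + mass_at t y.
Proof. by rewrite /mass_at big_cat. Qed.
Lemma mass1 x m y : mass_at [:: (x, m)] y = if x == y then m else 0.
Proof. by rewrite mass_cons mass_nil addr0. Qed.
Lemma massp p y : mass_at [:: p] y = if p.1 == y then p.2 else 0.
Proof. by rewrite mass_cons mass_nil addr0. Qed.
Lemma mom_nil j : moment j ([::] : pmlist R) = 0.
Proof. by rewrite /moment big_nil. Qed.
Lemma mom_cons j p s : moment j (p :: s) = p.2 * p.1 ^+ j + moment j s.
Proof. by rewrite /moment big_cons. Qed.
Lemma mom_cat j s t : moment j (s ++ t) = moment j s + moment j t.
Proof. by rewrite /moment big_cat. Qed.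
Lemma mom1 j x m : moment j [:: (x, m)] = m * x ^+ j.
Proof. by rewrite mom_cons mom_nil addr0. Qed.

Lemma mass_notin s y : (forall p, p \in s -> p.1 != y) -> mass_at s y = 0.
Proof.
elim: s => [|p s IH] H; first by rewrite mass_nil.
rewrite mass_cons IH ?addr0; last by move=> q Hq; apply: H; rewrite inE Hq orbT.
by rewrite (negbTE (H p (mem_head _ _))).
Qed.

Lemma mass_pos s y : pos s -> 0 <= mass_at s y.
Proof. move=> H; apply: sumr_ge0 => p _. Abort.

Lemma mass_ge0 s y : pos s -> 0 <= mass_at s y.
Proof.
elim: s => [|p s IH] H; first by rewrite mass_nil.
rewrite mass_cons addr_ge0 //; last by apply: IH => q Hq; apply: H; rewrite inE Hq orbT.
by case: ifP => // _; apply: H; rewrite mem_head.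
Qed.

Lemma pos_nn s : pos s -> nn s.
Proof. by move=> H y; apply: mass_ge0. Qed.

Lemma pos_cat s t : pos (s ++ t) <-> pos s /\ pos t.
Proof.
split.
  by move=> H; split=> p Hp; apply: H; rewrite mem_cat Hp ?orbT.
by case=> H1 H2 p; rewrite mem_cat => /orP [] ?; [apply: H1|apply: H2].
Qed.

Lemma mom_cover j s (X : seq R) : uniq X -> (forall p, p \in s -> p.1 \in X) ->
  moment j s = \sum_(y <- X) mass_at s y * y ^+ j.
Proof.
move=> uX; elim: s => [|p s IH] H.
  by rewrite mom_nil big1 // => y _; rewrite mass_nil mul0r.
rewrite mom_cons IH; last by move=> q Hq; apply: H; rewrite inE Hq orbT.
have pX : p.1 \in X by apply: H; rewrite mem_head.
under [in RHS]eq_bigr => y _ do rewrite mass_cons mulrDl.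
rewrite big_split /=; congr (_ + _).
rewrite (bigD1_seq p.1) //= eqxx big1 ?addr0 // => y Hy.
by rewrite eq_sym (negbTE Hy) mul0r.
Qed.

Lemma mom_meq j s t : meq s t -> moment j s = moment j t.
Proof.
move=> H; pose X := undup (map fst (s ++ t)).
have uX : uniq X by apply: undup_uniq.
rewrite (mom_cover j uX) ?(mom_cover j (s:=t) uX).
- by apply: eq_bigr => y _; rewrite H.
- by move=> p Hp; rewrite mem_undup; apply: map_f; rewrite mem_cat Hp orbT.
- by move=> p Hp; rewrite mem_undup; apply: map_f; rewrite mem_cat Hp.
Qed.

Lemma mom_diff j s t (Z : seq R) : uniq Z ->
  (forall y, y \notin Z -> mass_at s y = mass_at t y) ->
  moment j s - moment j t = \sum_(z <- Z) (mass_at s z - mass_at t z) * z ^+ j.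
Proof.
move=> uZ H; pose X := undup (map fst (s ++ t) ++ Z).
have uX : uniq X by apply: undup_uniq.
rewrite (mom_cover j uX) ?(mom_cover j (s:=t) uX); first last.
- by move=> p Hp; rewrite mem_undup mem_cat; apply/orP; left; apply: map_f; rewrite mem_cat Hp ?orbT.
- by move=> p Hp; rewrite mem_undup mem_cat; apply/orP; left; apply: map_f; rewrite mem_cat Hp ?orbT.
rewrite -sumrB.
under eq_bigr => y _ do rewrite -mulrBl.
rewrite (bigID (fun y => y \in Z)) /= [X in _ + X]big1 ?addr0; last first.
  by move=> y Hy; rewrite H // subrr mul0r.
rewrite -big_filter; apply: perm_big.
apply: uniq_perm; [by apply: filter_uniq|by []|].
move=> y; rewrite mem_filter mem_undup mem_cat.
by case: (y \in Z); rewrite ?orbT ?andbF.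
Qed.

Lemma meq_refl s : meq s s. Proof. by []. Qed.
Lemma meq_sym s t : meq s t -> meq t s. Proof. by move=> H y. Qed.
Lemma meq_trans s t u : meq s t -> meq t u -> meq s u.
Proof. by move=> H1 H2 y; rewrite H1. Qed.
Lemma meq_catC s t : meq (s ++ t) (t ++ s).
Proof. by move=> y; rewrite !mass_cat addrC. Qed.


Lemma dist_mass s p : is_dist s -> p \in s -> mass_at s p.1 = p.2.
Proof.
case=> U _; elim: s U => [|q s IH] //= /andP [Hq U] Hp.
rewrite mass_cons; move: Hp; rewrite inE => /orP [/eqP ->|Hp].
  by rewrite eqxx mass_notin ?addr0 // => r Hr; apply: contraNneq Hq => <-; apply: map_f.
have -> : (q.1 == p.1) = false.
  by apply/negbTE; apply: contraNneq Hq => ->; apply: map_f.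
by rewrite add0r IH.
Qed.

Lemma mass_map_uniq (f : R -> R) (Y : seq R) z : uniq Y ->
  mass_at (map (fun y => (y, f y)) Y) z = if z \in Y then f z else 0.
Proof.
elim: Y => [|y Y IH] /=; first by rewrite mass_nil.
case/andP=> Hy U; rewrite mass_cons IH // inE /=.
case: eqP => [<-|/eqP Hne]; last by rewrite add0r eq_sym (negbTE Hne).
by rewrite eqxx (negbTE Hy) addr0.
Qed.

Definition norm s : pmlist R :=
  map (fun y => (y, mass_at s y)) (filter (fun y => mass_at s y != 0) (undup (map fst s))).

Lemma norm_meq s : meq (norm s) s.
Proof.
move=> z; rewrite /norm mass_map_uniq; last by apply: filter_uniq; apply: undup_uniq.
rewrite mem_filter mem_undup; case: (boolP (mass_at s z != 0)) => /= H.
  case: ifP => // Hz; symmetry; apply: mass_notin => p Hp.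
  by apply: contraNneq (negbT Hz) => <-; apply: map_f.
by move/negPn/eqP: H => ->.
Qed.

Lemma norm_dist s : nn s -> is_dist (norm s).
Proof.
move=> H; split.
  rewrite /norm -map_comp map_id_in //; first by apply: filter_uniq; apply: undup_uniq.
move=> p /mapP [y Hy ->] /=; move: Hy; rewrite mem_filter => /andP [Hy _].
by rewrite lt_def Hy H.
Qed.

Lemma nn_dist s : nn s -> exists u, is_dist u /\ meq u s.
Proof. by move=> H; exists (norm s); split; [apply: norm_dist|apply: norm_meq]. Qed.

Lemma dist_pos s : is_dist s -> pos s.
Proof. by case=> _ H p Hp; apply: ltW; apply: H. Qed.

Lemma filter_pos_meq l : pos l -> meq (filter (fun q => 0 < q.2) l) l.
Proof.
elim: l => [|q l IH] Hl y //=.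
have Hl' : pos l by move=> p Hp; apply: Hl; rewrite inE Hp orbT.
case: ifP => Hq; first by rewrite !mass_cons IH.
have q0 : q.2 = 0.
  by apply/eqP; rewrite eq_le Hl ?mem_head // andbT leNgt Hq.
by rewrite mass_cons q0 IH //; case: ifP; rewrite add0r.
Qed.

Lemma filter_pos_mom j l : pos l -> moment j (filter (fun q => 0 < q.2) l) = moment j l.
Proof. by move=> H; apply: mom_meq; apply: filter_pos_meq. Qed.

Lemma split_meq u u' : is_dist u -> is_dist u' -> meq u u' -> split_le u u'.
Proof.
case: u => [|p u0] Hu Hu' H.
  case: u' Hu' H => [|q u1] Hu' H; first by apply: rt_refl.
  have := dist_mass Hu' (mem_head q u1); rewrite -H mass_nil => q0.
  by case: Hu' => _ /(_ q (mem_head _ _)); rewrite -q0 ltxx.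
apply: rt_step; split=> //; split=> //.
exists 0%N, [:: p]; split=> //; split.
  by move=> q; rewrite inE => /eqP ->; case: Hu => _; apply; rewrite mem_head.
rewrite /= /moment !big_cons !big_nil expr0 mulr1 expr1 !addr0; do 2 split=> //.
move=> y; rewrite -H /= drop0 mass_cons mass_cat mass_cons mass_nil addr0.
by case: (p.1 == y); rewrite addrC.
Qed.

Lemma mom0_ge0 t : pos t -> 0 <= moment 0 t.
Proof.
elim: t => [|p t IH] Ht; first by rewrite mom_nil.
rewrite mom_cons expr0 mulr1 addr_ge0 //; first by apply: Ht; rewrite mem_head.
by apply: IH => q Hq; apply: Ht; rewrite inE Hq orbT.
Qed.

Lemma mom0_zero t : pos t -> moment 0 t = 0 -> forall y, mass_at t y = 0.
Proof.
elim: t => [|p t IH] Ht M y; first by rewrite mass_nil.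
have Ht' : pos t by move=> q Hq; apply: Ht; rewrite inE Hq orbT.
have p0 : 0 <= p.2 by apply: Ht; rewrite mem_head.
move: M; rewrite mom_cons expr0 mulr1 => /eqP; rewrite paddr_eq0 //; last by apply: mom0_ge0.
case/andP=> /eqP P0 /eqP M0; rewrite mass_cons IH // P0; by case: ifP; rewrite addr0.
Qed.


Lemma psplit u u' x m t : is_dist u -> is_dist u' -> 0 <= m -> m <= mass_at u x ->
  pos t -> moment 0 t = m -> moment 1 t = m * x ->
  meq u' (u ++ (x, - m) :: t) -> split_le u u'.
Proof.
move=> Hu Hu' m0 Hm Ht M0 M1 H.
case: (boolP (x \in map fst u)) => Hx; last first.
  have ux : mass_at u x = 0.
    by apply: mass_notin => p Hp; apply: contraNneq Hx => <-; apply: map_f.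
  have m00 : m = 0 by apply/eqP; rewrite eq_le -{1}ux Hm m0.
  have t0 : forall y, mass_at t y = 0 by apply: mom0_zero => //; rewrite M0.
  apply: split_meq => //; apply: meq_sym => y.
  by rewrite H mass_cat mass_cons t0 m00 oppr0 addr0; case: ifP; rewrite addr0.
set i := index x (map fst u).
have Hi : (i < size u)%N by rewrite -(size_map fst) index_mem.
set p := nth (0, 0) u i.
have p1 : p.1 = x by rewrite /p -(nth_map _ 0) // nth_index.
have pu : p \in u by apply: mem_nth.
have pM : mass_at u x = p.2 by rewrite -p1; apply: dist_mass.
set t' := filter (fun q => 0 < q.2) (t ++ [:: (x, p.2 - m)]).
have Hpt : pos (t ++ [:: (x, p.2 - m)]).
  apply/pos_cat; split=> // q; rewrite inE => /eqP -> /=.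
  by rewrite subr_ge0 -pM.
apply: rt_step; split=> //; split=> //.
exists i, t'; split=> //; split.
  by move=> q; rewrite mem_filter => /andP [].
rewrite !filter_pos_mom // !mom_cat !mom1 expr0 expr1 M0 M1 mulr1 p1.
split; first by rewrite addrC subrK.
split; first by rewrite -mulrDl addrC subrK.
move=> y; rewrite H /t' !mass_cat (filter_pos_meq Hpt) mass_cat mass_cons mass1.
have -> : mass_at u y = mass_at (take i u ++ p :: drop i.+1 u) y by rewrite -drop_nth // cat_take_drop.
rewrite mass_cat mass_cons p1.
by case: (x == y) => /=; rprep; ring.
Qed.


Definition mle s s' := forall u u', is_dist u -> is_dist u' -> meq u s -> meq u' s' -> split_le u u'.

Lemma mle_meq s s' : meq s s' -> mle s s'.
Proof.
move=> H u u' Hu Hu' H1 H2; apply: split_meq => // y.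
by rewrite H1 H H2.
Qed.

Lemma mle_congr s1 s1' s2 s2' : meq s1 s1' -> meq s2 s2' -> mle s1 s2 -> mle s1' s2'.
Proof.
move=> H1 H2 H u u' Hu Hu' E1 E2; apply: H => // y; by rewrite ?E1 ?E2 ?H1 ?H2.
Qed.

Lemma mle_trans s1 s2 s3 : nn s2 -> mle s1 s2 -> mle s2 s3 -> mle s1 s3.
Proof.
move=> N H1 H2 u u' Hu Hu' E1 E3.
have [w [Hw Ew]] := nn_dist N.
apply: rt_trans (H1 u w _ _ _ _) (H2 w u' _ _ _ _) => //.
Qed.

Lemma mle_split s x m t : nn s -> 0 <= m -> m <= mass_at s x ->
  pos t -> moment 0 t = m -> moment 1 t = m * x -> mle s (s ++ (x, - m) :: t).
Proof.
move=> N m0 Hm Ht M0 M1 u u' Hu Hu' E1 E2.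
apply: (psplit (x:=x) (m:=m) (t:=t)) => //; first by rewrite E1.
by move=> y; rewrite E2 !mass_cat E1.
Qed.

Lemma split_decomp (s : pmlist R) i : (i < size s)%N -> forall y,
  mass_at s y = mass_at (take i s ++ drop i.+1 s) y +
    (if (nth (0,0) s i).1 == y then (nth (0,0) s i).2 else 0).
Proof.
move=> Hi y.
have -> : mass_at s y = mass_at (take i s ++ nth (0,0) s i :: drop i.+1 s) y
  by rewrite -drop_nth // cat_take_drop.
rewrite !mass_cat mass_cons; case: (_ == y) => /=; rprep; ring.
Qed.

Lemma bs_meas s s' : basic_split s s' -> exists x m t,
  [/\ 0 <= m, m <= mass_at s x, pos t, moment 0 t = m &
    moment 1 t = m * x /\ meq s' (s ++ (x, - m) :: t)].
Proof.
case=> Hs [Hs' [i [t [Hi [Ht [M0 [M1 E]]]]]]].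
set p := nth (0,0) s i in M0 M1 E.
have pin : p \in s by apply: mem_nth.
have p0 : 0 <= p.2 by apply: (dist_pos Hs).
have Hpos : pos (take i s ++ drop i.+1 s).
  by move=> q Hq; apply: (dist_pos Hs); move: Hq; rewrite mem_cat => /orP [/mem_take|/mem_drop].
exists p.1, p.2, t; split=> //.
- by rewrite (split_decomp Hi) -/p eqxx lerDr mass_ge0.
- by move=> q Hq; apply: ltW; apply: Ht.
split=> //.
move=> y; rewrite E mass_cat [RHS]mass_cat (split_decomp Hi) mass_cons mass_cat -/p /=.
by rewrite !mass_cat; case: (p.1 == y) => /=; rprep; ring.
Qed.

Lemma mle_ctx_aux c v v' : nn c -> clos_refl_trans_1n _ (@basic_split R) v v' ->
  mle (c ++ v) (c ++ v').
Proof.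
move=> Nc; elim=> [w|w1 w2 w3 H _ IH]; first by apply: mle_meq.
have [Hw1 [Hw2 _]] := H.
have [x [m [t [m0 Hm Ht M0 [M1 E]]]]] := bs_meas H.
apply: (mle_trans (s2 := c ++ w2)) => //.
  by move=> y; rewrite mass_cat; apply: addr_ge0; [apply: Nc|apply: mass_ge0; apply: dist_pos].
apply: (mle_congr (s1 := c ++ w1) (s2 := (c ++ w1) ++ (x, -m) :: t)) => //.
  by move=> y; rewrite !mass_cat E mass_cat addrA.
apply: mle_split => //.
- by move=> y; rewrite mass_cat; apply: addr_ge0; [apply: Nc|apply: mass_ge0; apply: dist_pos].
- by rewrite mass_cat ler_wpDl.
Qed.

Lemma mle_ctx c s s' : nn c -> nn s -> nn s' -> mle s s' -> mle (c ++ s) (c ++ s').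
Proof.
move=> Nc Ns Ns' H.
have [v [Hv Ev]] := nn_dist Ns.
have [v' [Hv' Ev']] := nn_dist Ns'.
have := H v v' Hv Hv' Ev Ev' => /clos_rt_rt1n_iff HH.
apply: (mle_congr (s1 := c ++ v) (s2 := c ++ v')).
- by move=> y; rewrite !mass_cat Ev.
- by move=> y; rewrite !mass_cat Ev'.
exact: mle_ctx_aux.
Qed.

Lemma mom1_le c l : pos l -> (forall q, q \in l -> q.1 <= c) -> moment 1 l <= c * moment 0 l.
Proof.
elim: l => [|p l IH] H1 H2; first by rewrite !mom_nil mulr0.
rewrite !mom_cons expr0 expr1 mulr1 mulrDr; apply: lerD.
  by rewrite [c * _]mulrC ler_wpM2l //; [apply: H1|apply: H2]; rewrite mem_head.
by apply: IH => q Hq; [apply: H1|apply: H2]; rewrite inE Hq orbT.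
Qed.

Lemma mom1_ge c l : pos l -> (forall q, q \in l -> c <= q.1) -> c * moment 0 l <= moment 1 l.
Proof.
elim: l => [|p l IH] H1 H2; first by rewrite !mom_nil mulr0.
rewrite !mom_cons expr0 expr1 mulr1 mulrDr; apply: lerD.
  by rewrite [c * _]mulrC ler_wpM2l //; [apply: H1|apply: H2]; rewrite mem_head.
by apply: IH => q Hq; [apply: H1|apply: H2]; rewrite inE Hq orbT.
Qed.

Lemma mom0_zero_mom j l : pos l -> moment 0 l = 0 -> moment j l = 0.
Proof.
move=> H1 H2; rewrite (@mom_meq j l [::]) ?mom_nil // => y.
by rewrite mom0_zero // mass_nil.
Qed.

Lemma meq_perm s t : perm_eq s t -> meq s t.
Proof. by move=> H y; rewrite /mass_at (perm_big _ H). Qed.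

Definition sc (k : R) (l : pmlist R) : pmlist R := map (fun q => @pair R R q.1 (k * q.2)) l.

Lemma sc_mass k l y : mass_at (sc k l) y = k * mass_at l y.
Proof.
elim: l => [|p l IH] /=; first by rewrite !mass_nil mulr0.
by rewrite !mass_cons IH mulrDr /=; case: ifP; rewrite ?mulr0.
Qed.

Lemma sc_mom j k l : moment j (sc k l) = k * moment j l.
Proof.
elim: l => [|p l IH] /=; first by rewrite !mom_nil mulr0.
by rewrite !mom_cons IH mulrDr /= mulrA.
Qed.

Lemma sc_pos k l : 0 <= k -> pos l -> pos (sc k l).
Proof.
move=> k0 H q /mapP [p Hp ->] /=; apply: mulr_ge0 => //; exact: H.
Qed.

Lemma filter_pos' (P : pred (R * R)) l : pos l -> pos (filter P l).
Proof. by move=> H q; rewrite mem_filter => /andP [_]; apply: H. Qed.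

Section Ext.
Variables a b : R.
Hypothesis ab : a < b.

Definition inside y := (a < y) && (y < b).
Definition exf (p : R * R) : pmlist R :=
  if inside p.1 then [:: @pair R R a (p.2 * (b - p.1) / (b - a)); @pair R R b (p.2 * (p.1 - a) / (b - a))]
  else [:: p].
Definition Ex s : pmlist R := flatten (map exf s).

Lemma ba0 : b - a != 0.
Proof. by rewrite subr_eq0 gt_eqF. Qed.
Lemma ba_gt0 : 0 < b - a.
Proof. by rewrite subr_gt0. Qed.

Lemma Ex_cat s t : Ex (s ++ t) = Ex s ++ Ex t.
Proof. by rewrite /Ex map_cat flatten_cat. Qed.
Lemma Ex_cons p s : Ex (p :: s) = exf p ++ Ex s.
Proof. by []. Qed.

Lemma exf_mom j p : (j <= 1)%N -> moment j (exf p) = p.2 * p.1 ^+ j.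
Proof.
rewrite /exf; case: ifP => _ Hj; last by rewrite mom_cons mom_nil addr0.
have /eqP H := ba0.
rewrite /moment !big_cons big_nil /=; case: j Hj => [|[|//]] _ /=; rprep; field; exact: H.
Qed.

Lemma Ex_mom j s : (j <= 1)%N -> moment j (Ex s) = moment j s.
Proof.
move=> Hj; elim: s => [|p s IH] //=.
by rewrite Ex_cons mom_cat IH exf_mom // mom_cons.
Qed.

Lemma exf_in y p : inside y -> mass_at (exf p) y = 0.
Proof.
move=> /andP [ay yb]; rewrite /exf; case: ifP => Hp.
  rewrite mass_cons mass1 /= eq_sym (gt_eqF ay) eq_sym (lt_eqF yb); by rewrite addr0.
rewrite massp; case: eqP => // E; move: Hp; by rewrite E /inside ay yb.
Qed.

Lemma Ex_in y s : inside y -> mass_at (Ex s) y = 0.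
Proof.
move=> Hy; elim: s => [|p s IH]; first by rewrite mass_nil.
by rewrite Ex_cons mass_cat IH exf_in // addr0.
Qed.

Lemma exf_out y p : ~~ (a <= y <= b) -> mass_at (exf p) y = mass_at [:: p] y.
Proof.
move=> Hy; rewrite /exf; case: ifP => // /andP [pa pb].
rewrite mass_cons !massp /=.
have -> : (a == y) = false by apply/negbTE; apply: contraNneq Hy => <-; rewrite lexx ltW.
have -> : (b == y) = false by apply/negbTE; apply: contraNneq Hy => <-; rewrite lexx ltW.
have -> : (p.1 == y) = false.
  by apply/negbTE; apply: contraNneq Hy => <-; rewrite !ltW.
by rewrite addr0.
Qed.

Lemma Ex_out y s : ~~ (a <= y <= b) -> mass_at (Ex s) y = mass_at s y.
Proof.
move=> Hy; elim: s => [|p s IH]; first by rewrite mass_nil.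
by rewrite Ex_cons mass_cat IH exf_out // [in RHS]mass_cons massp.
Qed.

Lemma Ex_pos s : pos s -> pos (Ex s).
Proof.
elim: s => [|p s IH] H //= q; rewrite mem_cat => /orP [].
  have p0 : 0 <= p.2 by apply: H; rewrite mem_head.
  rewrite /exf; case: ifP => [/andP [pa pb]|_]; last by rewrite inE => /eqP ->.
  have h := ba_gt0.
  rewrite !inE => /orP [] /eqP -> /=; (apply: divr_ge0; last exact: ltW h);
    apply: mulr_ge0 => //; rewrite subr_ge0 ltW //.
by apply: IH => r Hr; apply: H; rewrite inE Hr orbT.
Qed.

Lemma Ex_notin s q : q \in Ex s -> ~~ inside q.1.
Proof.
elim: s => [|p s IH] //=; rewrite mem_cat => /orP [|/IH //].
rewrite /exf; case: ifP => [_|Hp]; last by rewrite inE => /eqP -> ; rewrite Hp.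
by rewrite !inE => /orP [] /eqP -> /=; rewrite /inside ltxx ?andbF.
Qed.

Lemma exf_ge0 p y : 0 <= p.2 -> 0 <= mass_at (exf p) y.
Proof.
move=> H; have := Ex_pos (s:=[:: p]); rewrite /Ex /= cats0 => HH.
by apply: mass_ge0; apply: HH => q; rewrite inE => /eqP ->.
Qed.

Lemma exf_a p : a <= p.1 <= b -> mass_at (exf p) a = p.2 * (b - p.1) / (b - a).
Proof.
move=> /andP [xa xb]; have /eqP hba := ba0.
rewrite /exf; case: ifP => Hin.
  rewrite mass_cons massp /= eqxx gt_eqF //; rprep; field; exact: hba.
rewrite massp; case: eqP => [->|Hne]; first by rewrite -mulrA mulfV ?mulr1 // ba0.
have : p.1 = b.
  apply/eqP; rewrite eq_le xb /=; move: Hin; rewrite /inside.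
  by rewrite lt_neqAle xa eq_sym; case: eqP => //= _; rewrite leNgt => ->.
by move=> ->; rewrite subrr mulr0 mul0r.
Qed.

Lemma exf_b p : a <= p.1 <= b -> mass_at (exf p) b = p.2 * (p.1 - a) / (b - a).
Proof.
move=> /andP [xa xb]; have /eqP hba := ba0.
rewrite /exf; case: ifP => Hin.
  rewrite mass_cons massp /= eqxx lt_eqF //; rprep; field; exact: hba.
rewrite massp; case: eqP => [->|Hne]; first by rewrite -mulrA mulfV ?mulr1 // ba0.
have : p.1 = a.
  apply/eqP; rewrite eq_le xa andbT; move: Hin; rewrite /inside.
  by rewrite [p.1 < b]lt_neqAle xb; case: eqP => //= _; rewrite andbT leNgt => ->.
by move=> ->; rewrite subrr mulr0 mul0r.
Qed.

Lemma Ex_a x s : pos s -> a <= x <= b ->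
  mass_at s x * (b - x) / (b - a) <= mass_at (Ex s) a.
Proof.
move=> + Hx; elim: s => [|p s IH] H.
  by rewrite mass_nil !mul0r mass_nil.
have p0 : 0 <= p.2 by apply: H; rewrite mem_head.
have H' : pos s by move=> q Hq; apply: H; rewrite inE Hq orbT.
rewrite Ex_cons mass_cat mass_cons mulrDl mulrDl; apply: lerD; last by apply: IH.
case: eqP => [E|_]; last by rewrite !mul0r; apply: exf_ge0.
by rewrite exf_a E.
Qed.

Lemma Ex_b x s : pos s -> a <= x <= b ->
  mass_at s x * (x - a) / (b - a) <= mass_at (Ex s) b.
Proof.
move=> + Hx; elim: s => [|p s IH] H.
  by rewrite mass_nil !mul0r mass_nil.
have p0 : 0 <= p.2 by apply: H; rewrite mem_head.
have H' : pos s by move=> q Hq; apply: H; rewrite inE Hq orbT.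
rewrite Ex_cons mass_cat mass_cons mulrDl mulrDl; apply: lerD; last by apply: IH.
case: eqP => [E|_]; last by rewrite !mul0r; apply: exf_ge0.
by rewrite exf_b E.
Qed.


Lemma uniq2 s t : (forall y, y != a -> y != b -> mass_at s y = mass_at t y) ->
  moment 0 s = moment 0 t -> moment 1 s = moment 1 t -> meq s t.
Proof.
move=> H M0 M1.
have uZ : uniq [:: a; b] by rewrite /= inE lt_eqF.
have HZ : forall y, y \notin [:: a; b] -> mass_at s y = mass_at t y.
  by move=> y; rewrite !inE negb_or => /andP [H1 H2]; apply: H.
have D0 := mom_diff 0 uZ HZ; have D1 := mom_diff 1 uZ HZ.
rewrite M0 subrr !big_cons big_nil addr0 !expr0 !mulr1 in D0.
rewrite M1 subrr !big_cons big_nil addr0 !expr1 in D1.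
set P := mass_at s a - mass_at t a in D0 D1.
set Q := mass_at s b - mass_at t b in D0 D1.
have HP : P = - Q by apply/eqP; rewrite -addr_eq0 -D0.
have D2 : Q * (b - a) = 0 by rewrite [RHS]D1 HP; rprep; ring.
have Q0 : Q = 0.
  by move/eqP: D2; rewrite mulf_eq0 (negbTE ba0) orbF => /eqP.
have P0 : P = 0 by rewrite HP Q0 oppr0.
move=> y; case: (eqVneq y a) => [->|Ha]; first by apply/eqP; rewrite -subr_eq0 -/P P0.
case: (eqVneq y b) => [->|Hb]; first by apply/eqP; rewrite -subr_eq0 -/Q Q0.
exact: H.
Qed.

Lemma Ex_uniq h f : (forall y, inside y -> mass_at h y = 0) ->
  (forall y, ~~ (a <= y <= b) -> mass_at h y = mass_at f y) ->
  moment 0 h = moment 0 f -> moment 1 h = moment 1 f -> meq h (Ex f).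
Proof.
move=> Hin Hout M0 M1; apply: uniq2; last 2 first.
- by rewrite Ex_mom.
- by rewrite Ex_mom.
move=> y Ha Hb; case: (boolP (a <= y <= b)) => Hy; last by rewrite Hout // Ex_out.
have Hi : inside y.
  case/andP: Hy => H1 H2; rewrite /inside !lt_def H1 H2 !andbT Ha /=.
  by rewrite eq_sym.
by rewrite Hin // Ex_in.
Qed.

Lemma mle_exf p : 0 <= p.2 -> mle [:: p] (exf p).
Proof.
move=> p0; case: (boolP (inside p.1)) => Hin; last first.
  by rewrite /exf (negbTE Hin); apply: mle_meq.
apply: (mle_congr (s1 := [:: p]) (s2 := [:: p] ++ (p.1, - p.2) :: exf p)) => //.
  by move=> y; rewrite mass_cat !mass_cons mass_nil; case: (p.1 == y) => /=; rprep; ring.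
apply: mle_split => //.
- by apply: pos_nn => q; rewrite inE => /eqP ->.
- by rewrite massp eqxx.
- by have := Ex_pos (s:=[:: p]); rewrite /Ex /= cats0; apply => q; rewrite inE => /eqP ->.
- by rewrite exf_mom // expr0 mulr1.
- by rewrite exf_mom // expr1.
Qed.

Lemma step1 s : pos s -> mle s (Ex s).
Proof.
elim: s => [|p s IH] H; first by apply: mle_meq.
have p0 : 0 <= p.2 by apply: H; rewrite mem_head.
have H' : pos s by move=> q Hq; apply: H; rewrite inE Hq orbT.
have Ns : nn s by apply: pos_nn.
have NEs : nn (Ex s) by apply: pos_nn; apply: Ex_pos.
have Np : nn [:: p] by apply: pos_nn => q; rewrite inE => /eqP ->.
have Nexf : nn (exf p) by move=> y; apply: exf_ge0.
apply: (mle_trans (s2 := [:: p] ++ Ex s)).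
- by move=> y; rewrite mass_cat addr_ge0.
- by apply: (mle_ctx (c := [:: p])) => //; apply: IH.
rewrite Ex_cons; apply: (mle_congr (meq_catC _ _) (meq_catC _ _)).
by apply: mle_ctx => //; apply: mle_exf.
Qed.

Lemma core (E : pmlist R) x m : pos E -> (forall q, q \in E -> ~~ inside q.1) ->
  moment 0 E = m -> moment 1 E = m * x -> a <= x <= b ->
  exists A B : pmlist R, [/\ pos A, pos B, meq (A ++ B) E,
    moment 0 A = m * (b - x) / (b - a) /\ moment 1 A = m * (b - x) / (b - a) * a &
    moment 0 B = m * (x - a) / (b - a) /\ moment 1 B = m * (x - a) / (b - a) * b].
Proof.
move=> HE Hin M0 M1 /andP [xa xb].
have /eqP hba := ba0.
set L := filter (fun q => q.1 <= a) E.
set Rr := filter (predC (fun q => q.1 <= a)) E.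
have pL : pos L by apply: filter_pos'.
have pR : pos Rr by apply: filter_pos'.
have LR : meq (L ++ Rr) E by apply: meq_perm; rewrite perm_filterC.
set SL := moment 0 L; set SR := moment 0 Rr; set TL := moment 1 L; set TR := moment 1 Rr.
have SLp : 0 <= SL by apply: mom0_ge0.
have SRp : 0 <= SR by apply: mom0_ge0.
have HS : SL + SR = m by rewrite -M0 (mom_meq 0 (meq_sym LR)) mom_cat.
have HT : TL + TR = m * x by rewrite -M1 (mom_meq 1 (meq_sym LR)) mom_cat.
have TLa : TL <= a * SL by apply: mom1_le => // q; rewrite mem_filter => /andP [].
have TRb : b * SR <= TR.
  apply: mom1_ge => // q; rewrite mem_filter /= -ltNge => /andP [qa qE].
  move: (Hin q qE); rewrite /inside qa /= -leNgt; exact.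
set D := SL * TR - SR * TL.
have Did : D = SL * (TR - b * SR) + SR * (a * SL - TL) + (b - a) * SL * SR.
  by rewrite /D; rprep; ring.
have t1 : 0 <= SL * (TR - b * SR) by apply: mulr_ge0; rewrite // subr_ge0.
have t2 : 0 <= SR * (a * SL - TL) by apply: mulr_ge0; rewrite // subr_ge0.
have t3 : 0 <= (b - a) * SL * SR by apply: mulr_ge0 => //; apply: mulr_ge0 => //; apply: ltW; apply: ba_gt0.
have D0 : 0 <= D by rewrite Did !addr_ge0.
have m0 : 0 <= m by rewrite -HS addr_ge0.
have Hmbx : 0 <= m * b - m * x by rewrite -mulrBr mulr_ge0 // subr_ge0.
have Hmxa : 0 <= m * x - m * a by rewrite -mulrBr mulr_ge0 // subr_ge0.
pose lam := if D == 0 then 1 else (m * b - m * x) * (TR - a * SR) / ((b - a) * D).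
pose mu := if D == 0 then 0 else (m * b - m * x) * (a * SL - TL) / ((b - a) * D).
have Hlm : [/\ 0 <= lam <= 1, 0 <= mu <= 1, lam * SL + mu * SR = m * (b - x) / (b - a) &
           lam * TL + mu * TR = m * (b - x) / (b - a) * a].
  rewrite /lam /mu; case: eqP => HD.
  - have Z3 : (b - a) * SL * SR = 0.
      move: HD; rewrite Did => /eqP; rewrite paddr_eq0 ?addr_ge0 // => /andP [_ /eqP] //.
    have [HTL HTR] : TL = a * SL /\ TR = b * SR.
      move/eqP: Z3; rewrite !mulf_eq0 (negbTE ba0) /= => /orP [] /eqP Z.
      + have ZL : TL = 0 by apply: mom0_zero_mom.
        rewrite ZL Z mulr0; split=> //; apply/eqP; rewrite eq_le TRb andbT.
        have : TR = m * x by rewrite -HT ZL add0r.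
        have : SR = m by rewrite -HS Z add0r.
        by move=> -> ->; rewrite [b * _]mulrC ler_wpM2l.
      + have ZR : TR = 0 by apply: mom0_zero_mom.
        rewrite ZR Z mulr0; split=> //; apply/eqP; rewrite eq_le TLa /=.
        have : TL = m * x by rewrite -HT ZR addr0.
        have : SL = m by rewrite -HS Z addr0.
        by move=> -> ->; rewrite mulrC ler_wpM2l.
    split; rewrite ?ler01 ?lexx //.
    + have -> : m * (b - x) = (b - a) * SL by rewrite mulrBr -HT -HS HTL HTR; rprep; ring.
      rprep; field; exact: hba.
    + have -> : m * (b - x) = (b - a) * SL by rewrite mulrBr -HT -HS HTL HTR; rprep; ring.
      rewrite HTL; rprep; field; exact: hba.
  - have Dp : 0 < D by rewrite lt_def D0 andbT; apply/eqP.
    have bD : 0 < (b - a) * D by apply: mulr_gt0 => //; apply: ba_gt0.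
    have /eqP bD0 : (b - a) * D != 0 by rewrite gt_eqF.
    split.
    + rewrite divr_ge0 ?(ltW bD) ?mulr_ge0 //=; last by rewrite subr_ge0; apply: le_trans TRb; rewrite ler_wpM2r // ltW.
      rewrite ler_pdivrMr // mul1r -subr_ge0.
      have -> : (b - a) * D - (m * b - m * x) * (TR - a * SR) = (TR - b * SR) * (m * x - m * a).
        by rewrite -HT -HS /D; rprep; ring.
      by rewrite mulr_ge0 // subr_ge0.
    + rewrite divr_ge0 ?(ltW bD) ?mulr_ge0 //=; last by rewrite subr_ge0.
      rewrite ler_pdivrMr // mul1r -subr_ge0.
      have -> : (b - a) * D - (m * b - m * x) * (a * SL - TL) = (b * SL - TL) * (m * x - m * a).
        by rewrite -HT -HS /D; rprep; ring.
      by rewrite mulr_ge0 // subr_ge0; apply: le_trans TLa _; rewrite ler_wpM2r // ltW.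
    + rewrite /D; rprep; field; split => //.
    + rewrite /D; rprep; field; split => //.
case: Hlm => /andP [l0 l1] /andP [u0 u1] E0 E1.
exists (sc lam L ++ sc mu Rr), (sc (1 - lam) L ++ sc (1 - mu) Rr); split.
- by apply/pos_cat; split; apply: sc_pos.
- by apply/pos_cat; split; apply: sc_pos; rewrite // subr_ge0.
- move=> y; rewrite -LR !mass_cat !sc_mass; rprep; ring.
- by rewrite !mom_cat !sc_mom.
- rewrite !mom_cat !sc_mom; split.
  + have -> : (1 - lam) * SL + (1 - mu) * SR = (SL + SR) - (lam * SL + mu * SR) by rprep; ring.
    rewrite E0 HS; rprep; field; exact: hba.
  + have -> : (1 - lam) * TL + (1 - mu) * TR = (TL + TR) - (lam * TL + mu * TR) by rprep; ring.
    rewrite E1 HT; rprep; field; exact: hba.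
Qed.

Lemma step2 s s' : basic_split s s' -> mle (Ex s) (Ex s').
Proof.
move=> Hb; have [Hs [Hs' _]] := Hb.
have [x [m [t [m0 Hm Ht M0 [M1 E]]]]] := bs_meas Hb.
have ps : pos s by apply: dist_pos.
have pEs : pos (Ex s) by apply: Ex_pos.
have NEs : nn (Ex s) by apply: pos_nn.
have /eqP hba := ba0.
have Ms' : forall j, moment j s' = moment j s - m * x ^+ j + moment j t.
  by move=> j; rewrite (mom_meq j E) mom_cat mom_cons /= mulNr addrA.
case: (boolP (a <= x <= b)) => Hx; last first.
  set u := Ex s ++ (x, - m) :: t.
  have Nu : nn u.
    move=> y; rewrite /u mass_cat mass_cons /=; case: eqP => [<-|_].
      by rewrite addrA addr_ge0 ?mass_ge0 // Ex_out // subr_ge0.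
    by rewrite add0r addr_ge0 ?mass_ge0.
  apply: (mle_trans (s2 := u)) => //.
    by apply: mle_split => //; rewrite Ex_out.
  have [v [Hv Ev]] := nn_dist Nu.
  apply: (mle_congr (s1 := v) (s2 := Ex v)) => //.
  - apply: Ex_uniq.
    + by move=> y Hy; rewrite Ex_in.
    + move=> y Hy; rewrite Ex_out // Ev E /u !mass_cat Ex_out //.
    + by rewrite Ex_mom // (mom_meq 0 Ev) Ms' /u mom_cat mom_cons Ex_mom //= mulNr addrA.
    + by rewrite Ex_mom // (mom_meq 1 Ev) Ms' /u mom_cat mom_cons Ex_mom //= mulNr addrA.
  - by apply: step1; apply: dist_pos.
have pEt : pos (Ex t) by apply: Ex_pos.
have [A [B [pA pB AB [MA0 MA1] [MB0 MB1]]]] :=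
  core pEt (@Ex_notin t) (etrans (Ex_mom t (isT : (0 <= 1)%N)) M0)
      (etrans (Ex_mom t (isT : (1 <= 1)%N)) M1) Hx.
case/andP: Hx => xa xb.
set Ma := m * (b - x) / (b - a) in MA0 MA1.
set Mb := m * (x - a) / (b - a) in MB0 MB1.
have Ma0 : 0 <= Ma by rewrite /Ma divr_ge0 ?mulr_ge0 ?subr_ge0 // ltW // ba_gt0.
have Mb0 : 0 <= Mb by rewrite /Mb divr_ge0 ?mulr_ge0 ?subr_ge0 // ltW // ba_gt0.
have HMa : Ma <= mass_at (Ex s) a.
  apply: le_trans (Ex_a ps (x:=x) _); last by rewrite xa xb.
  by rewrite /Ma !ler_wpM2r // ?invr_ge0 ?subr_ge0 // ltW // ba_gt0.
have HMb : Mb <= mass_at (Ex s) b.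
  apply: le_trans (Ex_b ps (x:=x) _); last by rewrite xa xb.
  by rewrite /Mb !ler_wpM2r // ?invr_ge0 ?subr_ge0 // ltW // ba_gt0.
set u1 := Ex s ++ (a, - Ma) :: A.
have Nu1 : nn u1.
  move=> y; rewrite /u1 mass_cat mass_cons /=; case: eqP => [<-|_].
    by rewrite addrA addr_ge0 ?mass_ge0 // subr_ge0.
  by rewrite add0r addr_ge0 ?mass_ge0.
set u2 := u1 ++ (b, - Mb) :: B.
apply: (mle_trans (s2 := u1)) => //; first by apply: mle_split.
apply: (mle_congr (s1 := u1) (s2 := u2)) => //.
  apply: Ex_uniq.
  - move=> y Hy; have /andP [ay yb] := Hy.
    rewrite /u2 /u1 !mass_cat !mass_cons /= (lt_eqF ay) (gt_eqF yb) Ex_in // !add0r.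
    by rewrite -mass_cat AB Ex_in.
  - move=> y Hy.
    have ay : (a == y) = false by apply/negbTE; apply: contraNneq Hy => <-; rewrite lexx ltW.
    have by' : (b == y) = false by apply/negbTE; apply: contraNneq Hy => <-; rewrite lexx ltW.
    have xy : (x == y) = false by apply/negbTE; apply: contraNneq Hy => <-; rewrite xa xb.
    rewrite /u2 /u1 !mass_cat !mass_cons /= ay by' Ex_out // !add0r E mass_cat mass_cons /= xy add0r.
    by rewrite -addrA; congr (_ + _); rewrite -mass_cat AB Ex_out.
  - rewrite Ms' /u2 /u1 !mom_cat !mom_cons /= MA0 MB0 Ex_mom // M0 !expr0 !mulr1.
    rprep; ring.
  - rewrite Ms' /u2 /u1 !mom_cat !mom_cons /= MA1 MB1 Ex_mom // M1 !expr1.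
    rewrite /Ma /Mb; rprep; field; exact: hba.
apply: mle_split => //.
rewrite /u1 mass_cat mass_cons /= (lt_eqF ab) add0r.
by apply: le_trans HMb _; rewrite lerDl mass_ge0.
Qed.

Lemma step2_chain s s' : split_le s s' -> mle (Ex s) (Ex s').
Proof.
move=> /clos_rt_rt1n_iff; elim=> [w|w1 w2 w3 H _ IH]; first by apply: mle_meq.
have [_ [Hw2 _]] := H.
apply: (mle_trans (s2 := Ex w2)) => //; last by apply: step2.
by apply: pos_nn; apply: Ex_pos; apply: dist_pos.
Qed.

Lemma main_lt mu mu' d nu nu' : is_dist mu -> split_le mu mu' -> is_move a b d ->
  move_result d mu nu -> extreme_result a b mu' nu' -> split_le nu nu'.
Proof.
move=> Hmu Hsp [[_ Hd] [Md0 Md1]] [Hnu Enu] [Hnu' [Iin [Iout [I0 I1]]]].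
have dout : forall y, ~~ (a <= y <= b) -> mass_at d y = 0.
  move=> y Hy; apply: mass_notin => p Hp; have [_ Hp1] := Hd p Hp.
  by apply: contraNneq Hy => <-.
have Mnu : forall j, moment j nu = moment j mu + moment j d.
  by move=> j; rewrite -mom_cat; apply: mom_meq => y; rewrite Enu mass_cat.
have E1 : meq (Ex nu) (Ex mu).
  apply: Ex_uniq; first by move=> y Hy; rewrite Ex_in.
  - by move=> y Hy; rewrite Ex_out // Enu dout // addr0.
  - by rewrite Ex_mom // Mnu Md0 addr0.
  - by rewrite Ex_mom // Mnu Md1 addr0.
have E2 : meq nu' (Ex mu').
  apply: Ex_uniq => //.
  by move=> y Hy; apply: Iout; apply/negP.
have H : mle nu nu'.
  apply: (mle_trans (s2 := Ex nu)).
  - by apply: pos_nn; apply: Ex_pos; apply: dist_pos.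
  - by apply: step1; apply: dist_pos.
  apply: (mle_congr (s1 := Ex mu) (s2 := Ex mu')).
  - by apply: meq_sym.
  - by apply: meq_sym.
  by apply: step2_chain.
by apply: H.
Qed.

End Ext.

Lemma main_eq (a : R) mu mu' d nu nu' : is_dist mu -> split_le mu mu' -> is_move a a d ->
  move_result d mu nu -> extreme_result a a mu' nu' -> split_le nu nu'.
Proof.
move=> Hmu Hsp [[Ud Hd] [Md0 Md1]] [Hnu Enu] [Hnu' [Iin [Iout [I0 I1]]]].
have d0 : d = [::].
  clear Enu Md1; case: d Ud Hd Md0 => [|p [|q d']] //= Ud Hd Md0.
    move: Md0; rewrite /moment big_cons big_nil expr0 mulr1 addr0 => P0.
    by have [/eqP] := Hd p (mem_head _ _).
  have [_ /andP [H1 H2]] := Hd p (mem_head _ _).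
  have Hq : q \in [:: p, q & d'] by rewrite !inE eqxx orbT.
  have [_ /andP [H3 H4]] := Hd q Hq.
  have pa : p.1 = a by apply/eqP; rewrite eq_le H2 H1.
  have qa : q.1 = a by apply/eqP; rewrite eq_le H4 H3.
  by move: Ud; rewrite inE pa qa eqxx.
have Hmu' : is_dist mu'.
  move/clos_rt_rt1n_iff: Hsp Hmu; elim=> // w1 w2 w3 H _ IH _; apply: IH.
  by have [_ []] := H.
have E1 : meq nu mu by move=> y; rewrite Enu d0 mass_nil addr0.
have E2 : meq nu' mu'.
  have uZ : uniq [:: a] by [].
  have HZ : forall y, y \notin [:: a] -> mass_at nu' y = mass_at mu' y.
    move=> y; rewrite inE => Hy; apply: Iout => /andP [H1 H2].
    by move: Hy; rewrite eq_le H1 H2.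
  have D0 := mom_diff 0 uZ HZ.
  rewrite I0 subrr big_cons big_nil addr0 expr0 mulr1 in D0.
  move=> y; case: (eqVneq y a) => [->|Hy]; last by apply: HZ; rewrite inE.
  by apply/eqP; rewrite -subr_eq0 -D0.
apply: rt_trans (split_meq Hnu Hmu E1) _.
apply: rt_trans Hsp _.
by apply: split_meq => //; apply: meq_sym.
Qed.

End Alg.

Theorem mainTheorem10 (R : realFieldType) (mu mu' : pmlist R) (a b : R)
    (d nu nu' : pmlist R) :
  is_dist mu -> split_le mu mu' ->
  a <= b -> is_move a b d ->
  move_result d mu nu ->
  extreme_result a b mu' nu' ->
  split_le nu nu'.
Proof.
move=> H1 H2; rewrite le_eqVlt => /orP [/eqP <-|ab].
  exact: main_eq.
exact: (main_lt ab).
Qed.
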